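(* Let $f:\mathbb{R}^d\to\mathbb{R}$ be convex and differentiable, let $h:\mathbb{R}^d\to\mathbb{R}\cup\{+\infty\}$ be proper, closed and convex, let $x\in\mathbb{R}^d$, $\lambda>0$, write $G=G^{f}_{\lambda h}(x)$ and $x^+=x-\lambda G$. If $$f(x-2\lambda G)\le f(x-\lambda G)-\lambda\langle G,\nabla f(x)\rangle+\tfrac{\lambda}{2}\|G\|^2,$$ then $$\Big\langle x^+-x,\;\nabla f(x^+)-\nabla f(x)+\tfrac12 G\Big\rangle\le 0 .$$
   Context: $\mathbb{R}^d$ carries the standard inner product $\langle\cdot,\cdot\rangle$ and Euclidean norm $\|\cdot\|$. For $\lambda>0$ the proximal operator is $\mathrm{prox}_{\lambda h}(w)=\arg\min_{u\in\mathbb{R}^d}\big\{\lambda h(u)+\tfrac12\|u-w\|^2\big\}$. The gradient mapping is $G^{f}_{\lambda h}(x)=\frac{1}{\lambda}\Big(x-\mathrm{prox}_{\lambda h}\big(x-\lambda\nabla f(x)\big)\Big)$. *)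

(* Defs.v *)
From HB Require Import structures.
From mathcomp Require Import all_boot all_order all_algebra.
From mathcomp Require Import all_classical all_reals all_analysis.
Set Implicit Arguments. Unset Strict Implicit. Unset Printing Implicit Defensive.
Import Order.TTheory GRing.Theory Num.Theory.
Import numFieldNormedType.Exports.
Local Open Scope classical_set_scope.
Local Open Scope ring_scope.

Section Defs.
Variables (R : realType) (d : nat).
Notation V := 'rV[R]_d.

Definition dotp (u v : V) : R := \sum_(i < d) u ord0 i * v ord0 i.
Definition enorm (u : V) : R := Num.sqrt (dotp u u).

Definition ebasis (i : 'I_d) : V := \row_(j < d) (i == j)%:R.

Definition grad (f : V -> R) (x : V) : V := \row_(i < d) ('d f x (ebasis i)).

Definition convex_rfun (f : V -> R) : Prop :=
  forall (a b : V) (t : R), 0 <= t <= 1 ->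
    f (t *: a + (1 - t) *: b) <= t * f a + (1 - t) * f b.

Definition convex_efun (h : V -> \bar R) : Prop :=
  forall (a b : V) (t : R), 0 < t < 1 ->
    (h (t *: a + (1 - t) *: b)%R <= t%:E * h a + (1 - t)%:E * h b)%E.

Definition proper_efun (h : V -> \bar R) : Prop :=
  (exists u, (h u < +oo)%E) /\ (forall u, (-oo < h u)%E).

Definition closed_efun (h : V -> \bar R) : Prop :=
  closed [set p : V * R | (h p.1 <= p.2%:E)%E].

Definition is_prox (lam : R) (h : V -> \bar R) (w p : V) : Prop :=
  forall u : V,
    (lam%:E * h p + (2^-1 * enorm (p - w)%R ^+ 2)%:E
      <= lam%:E * h u + (2^-1 * enorm (u - w)%R ^+ 2)%:E)%E.

(* gradient mapping G^f_{lam h}(x) = (x - prox_{lam h}(x - lam grad f x)) / lam,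
   given p = prox_{lam h}(x - lam grad f x) *)
Definition grad_map (lam : R) (x p : V) : V := lam^-1 *: (x - p).
End Defs.

(* Main.v *)
Require Import Defs.
From HB Require Import structures.
From mathcomp Require Import all_boot all_order all_algebra.
From mathcomp Require Import all_classical all_reals all_analysis.
From mathcomp Require Import ring lra.
Import Order.TTheory GRing.Theory Num.Theory.
Import numFieldNormedType.Exports.
Local Open Scope classical_set_scope.
Local Open Scope ring_scope.

Section Aux.
Variables (R : realType) (d : nat).
Notation V := 'rV[R]_d.

Lemma conv_grad (f : V -> R) (z v : V) : convex_rfun f -> differentiable f z ->
  'd f z v <= f (z + v) - f z.
Proof.
move=> cf df; rewrite -deriveE //.
have Hd := @diff_derivable _ _ _ f z v df.
have Hq : (fun h : R => h^-1 *: ((f \o shift z) (h *: v) - f z)) @ 0^' --> 'D_v f z.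
  exact: Hd.
have Hr : (fun h : R => h^-1 *: ((f \o shift z) (h *: v) - f z)) @ 0^'+ --> 'D_v f z.
  move=> A /Hq /nbhs_ballP [_ /posnumP[e] xe_A].
  by exists e%:num => //= y xe_y; rewrite lt_def => /andP [xney _]; apply: xe_A.
apply: (cvgr_to_le Hr).
exists 1 => //= t; rewrite /ball /= sub0r normrN => Ht t0.
have t1 : t < 1 by rewrite (le_lt_trans (ler_norm t)).
have := cf (z + v) z t.
rewrite (ltW t0) (ltW t1) /= => /(_ isT).
have -> : t *: (z + v) + (1 - t) *: z = t *: v + z.
  by rewrite scalerDr scalerBl scale1r [t *: z + _]addrC -addrA [t *: z + _]addrCA subrr addr0. 
move=> H.
rewrite /= -/(shift z (t *: v)) /shift /= [_ + z]addrC in H *.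
rewrite /GRing.scale /= ler_pdivrMl //.
lra.
Qed.

Lemma d_dotp (f : V -> R) (z v : V) : 'd f z v = dotp v (grad f z).
Proof.
have -> : v = \sum_(i < d) v ord0 i *: @ebasis R d i.
  apply/rowP => j; rewrite summxE (bigD1 j) //= big1 ?addr0.
    by rewrite !mxE eqxx mulr1.
  by move=> i /negbTE ij; rewrite !mxE ij mulr0.
rewrite linear_sum /dotp; apply: eq_bigr => i _.
rewrite linearZ /= [X in _ = X * _]summxE [X in _ = _ * X]mxE.
congr (_ * _).
rewrite (bigD1 i) //= big1 ?addr0; first by rewrite !mxE eqxx mulr1.
by move=> k /negbTE ki; rewrite !mxE ki mulr0.
Qed.

Lemma dotp_lin (u a b c : V) (k l : R) :
  dotp (l *: u) (a - b + k *: c) = l * (dotp u a - dotp u b + k * dotp u c).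
Proof.
rewrite /dotp -sumrB mulr_sumr -big_split mulr_sumr /=; apply: eq_bigr => i _.
rewrite !mxE; ring.
Qed.

Lemma enorm_sq (u : V) : enorm u ^+ 2 = dotp u u.
Proof.
rewrite /enorm sqr_sqrtr // /dotp sumr_ge0 // => i _; by rewrite -expr2 sqr_ge0.
Qed.
Lemma dotpZl (u a : V) (l : R) : dotp (l *: u) a = l * dotp u a.
Proof. rewrite /dotp mulr_sumr; apply: eq_bigr => i _; rewrite !mxE; ring. Qed.
Lemma fin (lam A B C F1 F2 : R) : - lam * A <= F2 - F1 ->
  F2 <= F1 - lam * B + lam / 2 * C -> - lam * (A - B + 2^-1 * C) <= 0.
Proof.
move=> H1 H2.
have -> : - lam * (A - B + 2^-1 * C) = - lam * A + lam * B - lam / 2 * C by ring.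
lra.
Qed.
End Aux.

Theorem lemma2p1 (R : realType) (d : nat) (f : 'rV[R]_d -> R)
  (h : 'rV[R]_d -> \bar R) (x : 'rV[R]_d) (lam : R) :
  convex_rfun f -> (forall y, differentiable f y) ->
  proper_efun h -> closed_efun h -> convex_efun h -> 0 < lam ->
  forall p : 'rV[R]_d, is_prox lam h (x - lam *: grad f x) p ->
  let G := grad_map lam x p in
  let xp := x - lam *: G in
  f (x - (2 * lam) *: G) <=
    f (x - lam *: G) - lam * dotp G (grad f x) + lam / 2 * enorm G ^+ 2 ->
  dotp (xp - x) (grad f xp - grad f x + 2^-1 *: G) <= 0.
Proof.
move=> cf df _ _ _ lam0 p _ G xp Hyp.
have Hc := @conv_grad R d f xp ((- lam) *: G) cf (df xp).
rewrite d_dotp dotpZl in Hc.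
have e1 : xp + (- lam) *: G = x - (2*lam) *: G.
  by rewrite /xp -addrA scaleNr -opprD -scalerDl mulr2n mulrDl mul1r.
have e2 : xp - x = (- lam) *: G.
  by rewrite /xp addrAC subrr add0r scaleNr.
rewrite e1 in Hc; rewrite e2 dotp_lin; rewrite enorm_sq in Hyp.
rewrite -/xp in Hyp.
exact: (@fin R _ _ _ _ _ _ Hc Hyp).
Qed.
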